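(* Let $\alpha,a,b>0$ with $\alpha\le a<2\alpha$ and $ab\in\left[\frac{M-1}{M},\frac{M}{M+1}\right[$ for some integer $M\ge2$, and let $\kappa$ be the largest integer with $(1-ab)\kappa\le b\alpha$. Let $h:\mathbb{R}\to\mathbb{C}$ satisfy $h(x)=0$ for all $$x\notin -\Big(\bigcup_{k=1}^{\kappa}\big[\tfrac{k}{b},ak+\alpha\big]\Big)\cup[-\alpha,\alpha]\cup\bigcup_{k=1}^{\kappa}\big[\tfrac{k}{b},ak+\alpha\big],$$ where $-S=\{-s:s\in S\}$ and an empty union is empty. Then: (a) $h(x)=h(x+a)=0$ for every $n\in\{1,\dots,\kappa\}$ and $x\in\,]\alpha+a(n-1),\frac{n}{b}[$, and for every $n\in\{-1,\dots,-\kappa\}$ and $x\in\,]\frac{n}{b}-a,an-\alpha[$; (b) $h(x)=h(x+a)=0$ for every $n\in\{\pm(\kappa+1),\dots,\pm(M-1)\}$ and $x\in[\frac{n}{b}-a,\frac{n}{b}]$. *)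

(* Defs.v *)
From Stdlib Require Import Reals ZArith Lra Lia.
From Coquelicot Require Import Coquelicot.
Open Scope R_scope.

Definition supp_set (alpha a b : R) (kappa : Z) (x : R) : Prop :=
  (exists k : Z, (1 <= k <= kappa)%Z /\ IZR k / b <= - x <= a * IZR k + alpha)
  \/ (- alpha <= x <= alpha)
  \/ (exists k : Z, (1 <= k <= kappa)%Z /\ IZR k / b <= x <= a * IZR k + alpha).

Definition is_kappa (alpha a b : R) (kappa : Z) : Prop :=
  (1 - a * b) * IZR kappa <= b * alpha /\
  forall k : Z, (1 - a * b) * IZR k <= b * alpha -> (k <= kappa)%Z.

(* Main.v *)
Require Import Defs.
From Stdlib Require Import Reals ZArith Lra Lia Psatz.
From Coquelicot Require Import Coquelicot.
Open Scope R_scope.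

Lemma divle (b p q : R) : 0 < b -> p <= q -> p / b <= q / b.
Proof. intros. unfold Rdiv. apply Rmult_le_compat_r; [|auto]. left; apply Rinv_0_lt_compat; auto. Qed.

Lemma succ_div (a b c : R) : 0 < b -> a * b < 1 -> c / b + a <= (c + 1) / b.
Proof.
  intros Hb Hab.
  assert (a < 1 / b).
  { apply (Rmult_lt_reg_r b); auto. unfold Rdiv. rewrite Rmult_assoc, Rinv_l; lra. }
  replace ((c+1)/b) with (c/b + 1/b) by (field; lra). lra.
Qed.

Lemma gap2 (alpha a b y : R) (c : Z) : 0 < a -> a * IZR c + alpha < y ->
  forall k : Z, (k <= c)%Z -> ~ (IZR k / b <= y <= a * IZR k + alpha).
Proof.
  intros Ha H k Hk [_ H2].
  assert (IZR k <= IZR c) by (apply IZR_le; auto).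
  assert (a * IZR k <= a * IZR c) by (apply Rmult_le_compat_l; lra). lra.
Qed.

Lemma gap (alpha a b y : R) (c : Z) : 0 < a -> 0 < b -> a * IZR c + alpha < y ->
  y < IZR (c + 1) / b -> forall k : Z, ~ (IZR k / b <= y <= a * IZR k + alpha).
Proof.
  intros Ha Hb H1 H2 k Hk.
  destruct (Z_le_gt_dec k c).
  - exact (gap2 alpha a b y c Ha H1 k l Hk).
  - assert (IZR (c+1) <= IZR k) by (apply IZR_le; lia).
    assert (IZR (c+1) / b <= IZR k / b) by (apply divle; auto). lra.
Qed.

Lemma kpos (b : R) (k : Z) : 0 < b -> (1 <= k)%Z -> 0 < IZR k / b.
Proof. intros. unfold Rdiv. apply Rmult_lt_0_compat. apply IZR_lt; lia.
  apply Rinv_0_lt_compat; auto. Qed.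

Lemma out_pos (alpha a b : R) (kappa : Z) y : 0 < b -> 0 < alpha -> alpha < y ->
  (forall k, (1 <= k <= kappa)%Z -> ~ (IZR k / b <= y <= a * IZR k + alpha)) ->
  ~ supp_set alpha a b kappa y.
Proof.
  intros Hb Hal Hy H HS; unfold supp_set in HS; destruct HS as [[k [Hk Hk2]]|[Hx|[k [Hk Hk2]]]].
  - pose proof (kpos b k Hb (proj1 Hk)). lra.
  - lra.
  - exact (H k Hk Hk2).
Qed.

Lemma out_neg (alpha a b : R) (kappa : Z) y : 0 < b -> 0 < alpha -> y < - alpha ->
  (forall k, (1 <= k <= kappa)%Z -> ~ (IZR k / b <= - y <= a * IZR k + alpha)) ->
  ~ supp_set alpha a b kappa y.
Proof.
  intros Hb Hal Hy H HS; unfold supp_set in HS; destruct HS as [[k [Hk Hk2]]|[Hx|[k [Hk Hk2]]]].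
  - exact (H k Hk Hk2).
  - lra.
  - pose proof (kpos b k Hb (proj1 Hk)). lra.
Qed.

Lemma keyb (alpha a b : R) (kappa n : Z) : 0 < b -> is_kappa alpha a b kappa ->
  (kappa + 1 <= n)%Z -> IZR n / b - a * IZR n > alpha.
Proof.
  intros Hb [_ Hk] Hn.
  assert (~ ((1 - a*b) * IZR n <= b * alpha)) by (intro C; specialize (Hk n C); lia).
  assert ((1 - a*b) * IZR n = b * (IZR n / b - a * IZR n)) by (field; lra).
  apply Rnot_le_lt in H. rewrite H0 in H.
  apply (Rmult_lt_reg_l b); lra.
Qed.

Theorem lemma3p3 (alpha a b : R) (M kappa : Z) (h : R -> C) :
  0 < alpha -> 0 < a -> 0 < b ->
  alpha <= a < 2 * alpha ->
  (2 <= M)%Z ->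
  (IZR M - 1) / IZR M <= a * b < IZR M / (IZR M + 1) ->
  is_kappa alpha a b kappa ->
  (forall x : R, ~ supp_set alpha a b kappa x -> h x = 0%C) ->
  (* (a) *)
  ((forall n : Z, (1 <= n <= kappa)%Z ->
      forall x : R, alpha + a * (IZR n - 1) < x < IZR n / b ->
        h x = 0%C /\ h (x + a) = 0%C)
   /\ (forall n : Z, (- kappa <= n <= -1)%Z ->
      forall x : R, IZR n / b - a < x < a * IZR n - alpha ->
        h x = 0%C /\ h (x + a) = 0%C))
  /\
  (* (b) *)
  (forall n : Z, ((kappa + 1 <= n <= M - 1)%Z \/ (- (M - 1) <= n <= - (kappa + 1))%Z) ->
      forall x : R, IZR n / b - a <= x <= IZR n / b ->
        h x = 0%C /\ h (x + a) = 0%C).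
Proof.
  intros Hal Ha Hb Haa HM [_ HabM] Hk Hh.
  assert (Hab : a * b < 1).
  { assert (IZR M / (IZR M + 1) < 1).
    { assert (2 <= IZR M) by (apply IZR_le; lia).
      apply (Rmult_lt_reg_r (IZR M + 1)); [lra|].
      unfold Rdiv; rewrite Rmult_assoc, Rinv_l; lra. }
    lra. }
  split; [split|].
  - intros n Hn x Hx.
    assert (HN1: 1 <= IZR n) by (apply IZR_le; lia).
    assert (0 <= a * (IZR n - 1)) by (apply Rmult_le_pos; lra).
    split; apply Hh.
    + apply out_pos; [auto|auto|lra|]. intros k _.
      apply (gap alpha a b x (n - 1)); auto.
      rewrite minus_IZR; lra. replace (n - 1 + 1)%Z with n by lia; lra.
    + apply out_pos; [auto|auto|lra|]. intros k _.
      apply (gap alpha a b (x + a) n); auto.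
      lra. pose proof (succ_div a b (IZR n) Hb Hab). rewrite plus_IZR; lra.
  - intros n Hn x Hx.
    set (m := (- n)%Z).
    assert (Hm : IZR n = - IZR m) by (unfold m; rewrite opp_IZR; lra).
    assert (HN1: 1 <= IZR m) by (apply IZR_le; unfold m; lia).
    assert (Hdiv : IZR n / b = - (IZR m / b)) by (rewrite Hm; field; lra).
    rewrite Hdiv, Hm in Hx.
    assert (0 <= a * (IZR m - 1)) by (apply Rmult_le_pos; lra).
    split; apply Hh.
    + apply out_neg; [auto|auto|nra|]. intros k _.
      apply (gap alpha a b (- x) m); auto.
      lra. pose proof (succ_div a b (IZR m) Hb Hab). rewrite plus_IZR; lra.
    + apply out_neg; [auto|auto|nra|]. intros k _.
      apply (gap alpha a b (- (x + a)) (m - 1)); auto.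
      rewrite minus_IZR; nra. replace (m - 1 + 1)%Z with m by lia; lra.
  - intros n [Hn|Hn] x Hx.
    + pose proof (keyb alpha a b kappa n Hb Hk (proj1 Hn)).
      assert (HN1: 1 <= IZR n) by (apply IZR_le; destruct Hk as [Hk1 Hk2];
        assert (Hk0 : (0 <= kappa)%Z) by (apply Hk2; rewrite Rmult_0_r; nra); lia).
      assert (0 <= a * (IZR n - 1)) by (apply Rmult_le_pos; lra).
      split; apply Hh.
      * apply out_pos; [auto|auto|nra|]. intros k Hk'.
        apply (gap2 alpha a b x (n - 1)); auto. rewrite minus_IZR; nra. lia.
      * apply out_pos; [auto|auto|nra|]. intros k Hk'.
        apply (gap2 alpha a b (x + a) (n - 1)); auto. rewrite minus_IZR; nra. lia.
    + set (m := (- n)%Z).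
      assert (Hm : IZR n = - IZR m) by (unfold m; rewrite opp_IZR; lra).
      pose proof (keyb alpha a b kappa m Hb Hk ltac:(unfold m; lia)).
      assert (HN1: 1 <= IZR m) by (apply IZR_le; destruct Hk as [Hk1 Hk2];
        assert (Hk0 : (0 <= kappa)%Z) by (apply Hk2; rewrite Rmult_0_r; nra); unfold m; lia).
      assert (Hdiv : IZR n / b = - (IZR m / b)) by (rewrite Hm; field; lra).
      rewrite Hdiv in Hx.
      assert (0 <= a * (IZR m - 1)) by (apply Rmult_le_pos; lra).
      split; apply Hh.
      * apply out_neg; [auto|auto|nra|]. intros k Hk'.
        apply (gap2 alpha a b (- x) (m - 1)); auto. rewrite minus_IZR; nra. unfold m; lia.
      * apply out_neg; [auto|auto|nra|]. intros k Hk'.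
        apply (gap2 alpha a b (- (x + a)) (m - 1)); auto. rewrite minus_IZR; nra. unfold m; lia.
Qed.
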